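(* Let $h=(X,E,\mathit{in}_0)$ be a flow graph over a flow monoid $\mathbb{M}$ all of whose edge functions are continuous and distributive. Then for every inflow $\mathit{in}:(\mathbb{N}\setminus X)\times X\to\mathbb{M}$, every $y\in X$ and every $z\in\mathbb{N}\setminus X$, $$\mathsf{tf}(h)(\mathit{in})(y,z)=\sum_{x\in X}\ \sum_{p\in\mathrm{Paths}_h(x\to(y,z))}E_p(\mathit{in}_x).$$
   Context: A flow monoid is a commutative monoid $(\mathbb{M},+,0)$ such that $n\le m :\iff \exists o.\ m=n+o$ is a partial order in which every ascending chain $K$ has a least upper bound $\bigsqcup K$, and $n+\bigsqcup K=\bigsqcup(n+K)$. $\mathcal{C}(\mathbb{M}\to\mathbb{M})$ is the set of functions commuting with least upper bounds of ascending chains (continuous). A function $f$ is distributive if $f(m+n)=f(m)+f(n)$ for all $m,n$ and $f(0)=0$. Infinite sums denote least upper bounds of the ascending chain of finite partial sums; empty sums are $0$. A flow graph is $h=(X,E,\mathit{in})$ with $X\subseteq\mathbb{N}$ finite, $E:X\times\mathbb{N}\to\mathcal{C}(\mathbb{M}\to\mathbb{M})$, $\mathit{in}:(\mathbb{N}\setminus X)\times X\to\mathbb{M}$; $\mathit{in}_x=\sum_{y\in\mathbb{N}\setminus X}\mathit{in}(y,x)$; the flow is the least $\mathit{flow}:X\to\mathbb{M}$ with $\mathit{flow}(x)=\mathit{in}_x+\sum_{y\in X}E(y,x)(\mathit{flow}(y))$; the outflow is $\mathit{out}(x,y)=E(x,y)(\mathit{flow}(x))$ for $x\in X$, $y\notin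 X$. The transfer function $\mathsf{tf}(h)(\mathit{in}')$ is the outflow of $(X,E,\mathit{in}')$. A path through $h$ is a sequence $p=x_0x_1\cdots x_nz$ with $n\ge0$, $x_i\in X$, $z\in\mathbb{N}\setminus X$; $\mathrm{first}(p)=x_0$, $\mathrm{last}(p)=x_n$. $\mathrm{Paths}_h(x\to(y,z))$ is the set of paths with $x_0=x$, $x_n=y$ and final element $z$. Its edge function is $E_p=E(x_n,z)\circ E(x_{n-1},x_n)\circ\cdots\circ E(x_0,x_1)$. *)

(* Defs.v *)
From HB Require Import structures.
From mathcomp Require Import all_boot all_algebra finmap.
From Stdlib Require Import ClassicalEpsilon.
Set Implicit Arguments. Unset Strict Implicit. Unset Printing Implicit Defensive.
Import GRing.Theory.
Local Open Scope ring_scope.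

Section FlowMonoid.
Variable M : nmodType.

Definition leM (n m : M) : Prop := exists o, m = n + o.

Definition ascending (K : nat -> M) : Prop := forall i, leM (K i) (K i.+1).

Definition is_lub (S : M -> Prop) (s : M) : Prop :=
  (forall m, S m -> leM m s) /\ (forall u, (forall m, S m -> leM m u) -> leM s u).

Definition range (K : nat -> M) : M -> Prop := fun m => exists i, m = K i.

(* flow monoid: leM is a partial order (reflexivity and transitivity are
   automatic; antisymmetry is required), every ascending chain has a lub,
   and n + lub K = lub (n + K). *)
Definition flow_monoid : Prop :=
  [/\ (forall n m, leM n m -> leM m n -> n = m),
      (forall K, ascending K -> exists s, is_lub (range K) s) &
      (forall n K s, ascending K -> is_lub (range K) s ->
                     is_lub (range (fun i => n + K i)) (n + s))].

Definition lub (K : nat -> M) : M :=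
  epsilon (inhabits 0) (is_lub (range K)).

Definition continuousM (f : M -> M) : Prop :=
  forall K s, ascending K -> is_lub (range K) s ->
              is_lub (range (fun i => f (K i))) (f s).

Definition distributive (f : M -> M) : Prop :=
  (forall m n, f (m + n) = f m + f n) /\ f 0 = 0.

Definition isum (T : countType) (P : pred T) (f : T -> M) : M :=
  lub (fun n => \sum_(i < n)
         match @pickle_inv T i with
         | Some t => if P t then f t else 0
         | None => 0
         end).

(* Flow graph h = (X, E, in) with X a finite subset of nat,
   E : nat -> nat -> (M -> M) (only E x y with x \in X matters),
   in : nat -> nat -> M (only in y x with y \notin X, x \in X matters). *)

Definition inflow (X : {fset nat}) (inf : nat -> nat -> M) (x : nat) : M :=
  isum (fun y : nat => y \notin X) (fun y => inf y x).

Definition flow_eq (X : {fset nat}) (E : nat -> nat -> M -> M)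
    (inf : nat -> nat -> M) (f : nat -> M) : Prop :=
  forall x, x \in X -> f x = inflow X inf x + \sum_(y <- X) E y x (f y).

Definition is_least_flow (X : {fset nat}) (E : nat -> nat -> M -> M)
    (inf : nat -> nat -> M) (f : nat -> M) : Prop :=
  flow_eq X E inf f /\
  forall g, flow_eq X E inf g -> forall x, x \in X -> leM (f x) (g x).

(* the flow (values outside X are irrelevant) *)
Definition flow (X : {fset nat}) (E : nat -> nat -> M -> M)
    (inf : nat -> nat -> M) : nat -> M :=
  epsilon (inhabits (fun _ => 0)) (is_least_flow X E inf).

Definition tf (X : {fset nat}) (E : nat -> nat -> M -> M)
    (inf : nat -> nat -> M) (x y : nat) : M :=
  E x y (flow X E inf x).

End FlowMonoid.

(* A path x0 x1 ... xn z (n >= 0) is a sequence of length >= 2 whose elements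
   except the last lie in X and whose last element z lies outside X.
   is_path_to X x y z p : p is in Paths_h(x -> (y, z)). *)
Definition is_path_to (X : {fset nat}) (x y z : nat) (p : seq nat) : bool :=
  [&& (1 < size p)%N, all (fun v => v \in X) (take (size p).-1 p),
      head 0 p == x, nth 0 p (size p).-2 == y, last 0 p == z & z \notin X].

Fixpoint pathfun (M : Type) (E : nat -> nat -> M -> M) (p : seq nat) : M -> M :=
  match p with
  | a :: ((b :: _) as t) => fun m => pathfun E t (E a b m)
  | _ => fun m => m
  end.

(* Main.v *)
Require Import Defs.
From HB Require Import structures.
From mathcomp Require Import all_boot all_algebra finmap.
From Stdlib Require Import ClassicalEpsilon FunctionalExtensionality.
Set Implicit Arguments. Unset Strict Implicit. Unset Printing Implicit Defensive.
Import GRing.Theory.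
Local Open Scope ring_scope.

Lemma leM_refl (M : nmodType) (m : M) : leM m m.
Proof. by exists 0; rewrite addr0. Qed.

Lemma leM_trans (M : nmodType) (a b c : M) : leM a b -> leM b c -> leM a c.
Proof. by move=> [o ->] [o' ->]; exists (o + o'); rewrite addrA. Qed.

Lemma leM0 (M : nmodType) (m : M) : leM 0 m.
Proof. by exists m; rewrite add0r. Qed.

Lemma leM_addr (M : nmodType) (m o : M) : leM m (m + o).
Proof. by exists o. Qed.

Lemma leM_addl (M : nmodType) (m o : M) : leM m (o + m).
Proof. by exists o; rewrite addrC. Qed.

Lemma leM_add (M : nmodType) (a b c d : M) : leM a b -> leM c d -> leM (a + c) (b + d).
Proof.
move=> [o ->] [o' ->]; exists (o + o').
by rewrite -!addrA; congr (_ + _); rewrite addrCA.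
Qed.

Lemma leM_sum (M : nmodType) (I : Type) (s : seq I) (P : pred I) (F G : I -> M) :
  (forall i, P i -> leM (F i) (G i)) ->
  leM (\sum_(i <- s | P i) F i) (\sum_(i <- s | P i) G i).
Proof.
move=> H; elim/big_ind2: _ => //; first exact: leM_refl.
by move=> ? ? ? ? ; apply: leM_add.
Qed.

Lemma leM_sum_seq (M : nmodType) (I : eqType) (s : seq I) (F G : I -> M) :
  (forall i, i \in s -> leM (F i) (G i)) ->
  leM (\sum_(i <- s) F i) (\sum_(i <- s) G i).
Proof. by move=> H; rewrite big_seq [X in leM _ X]big_seq; apply: leM_sum. Qed.

Lemma distr_mono (M : nmodType) (f : M -> M) : distributive f ->
  forall a b, leM a b -> leM (f a) (f b).
Proof. by move=> [Hd _] a b [o ->]; rewrite Hd; apply: leM_addr. Qed.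

Lemma distr_sum (M : nmodType) (f : M -> M) : distributive f ->
  forall (I : Type) (s : seq I) (P : pred I) (F : I -> M),
  f (\sum_(i <- s | P i) F i) = \sum_(i <- s | P i) f (F i).
Proof. by move=> [Hd H0] I s P F; apply: big_morph. Qed.

Lemma asc_le (M : nmodType) (K : nat -> M) : ascending K ->
  forall i j, (i <= j)%N -> leM (K i) (K j).
Proof.
move=> HK i j; elim: j => [|j IH]; first by rewrite leqn0 => /eqP ->; apply: leM_refl.
rewrite leq_eqVlt => /orP [/eqP ->|]; first exact: leM_refl.
by rewrite ltnS => /IH H; apply: leM_trans H (HK j).
Qed.

Lemma lub_unique (M : nmodType) (HM : flow_monoid M) S (a b : M) :
  is_lub S a -> is_lub S b -> a = b.
Proof.
case: HM => Ha _ _ [A1 A2] [B1 B2].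
by apply: Ha; [apply: A2 | apply: B2].
Qed.

Lemma lubP (M : nmodType) (HM : flow_monoid M) (K : nat -> M) :
  ascending K -> is_lub (range K) (lub K).
Proof.
move=> HK; rewrite /lub; apply: epsilon_spec.
by case: HM => _ H _; apply: H.
Qed.

Lemma lub_eq (M : nmodType) (HM : flow_monoid M) (K : nat -> M) s :
  ascending K -> is_lub (range K) s -> lub K = s.
Proof. by move=> HK Hs; exact: (lub_unique HM (lubP HM HK) Hs). Qed.

Lemma is_lub_ub (M : nmodType) (K : nat -> M) s i : is_lub (range K) s -> leM (K i) s.
Proof. by case=> H _; apply: H; exists i. Qed.

Lemma is_lub_least (M : nmodType) (K : nat -> M) s u :
  is_lub (range K) s -> (forall i, leM (K i) u) -> leM s u.
Proof. by case=> _ H Hu; apply: H => m [i ->]. Qed.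

Lemma is_lubI (M : nmodType) (K : nat -> M) s :
  (forall i, leM (K i) s) -> (forall u, (forall i, leM (K i) u) -> leM s u) ->
  is_lub (range K) s.
Proof.
move=> H1 H2; split; first by move=> m [i ->].
by move=> u Hu; apply: H2 => i; apply: Hu; exists i.
Qed.

Lemma cofinal_lub (M : nmodType) (HM : flow_monoid M) (K L : nat -> M) a b :
  is_lub (range K) a -> is_lub (range L) b ->
  (forall k, exists n, leM (K k) (L n)) -> (forall n, exists k, leM (L n) (K k)) ->
  a = b.
Proof.
move=> Ha Hb H1 H2; case: (HM) => Han _ _; apply: Han.
  apply: (is_lub_least Ha) => k; have [n Hn] := H1 k.
  by apply: leM_trans Hn (is_lub_ub _ Hb).
apply: (is_lub_least Hb) => n; have [k Hk] := H2 n.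
by apply: leM_trans Hk (is_lub_ub _ Ha).
Qed.

Lemma lub_shift (M : nmodType) (K : nat -> M) s : ascending K ->
  is_lub (range K) s -> is_lub (range (fun i => K i.+1)) s.
Proof.
move=> HK Hs; apply: is_lubI => [i|u Hu]; first exact: is_lub_ub Hs.
apply: (is_lub_least Hs) => i; apply: leM_trans (HK i) (Hu i).
Qed.

Lemma asc_add (M : nmodType) (K L : nat -> M) : ascending K -> ascending L ->
  ascending (fun i => K i + L i).
Proof. by move=> HK HL i; apply: leM_add. Qed.

Lemma lub_add (M : nmodType) (HM : flow_monoid M) (K L : nat -> M) a b :
  ascending K -> ascending L -> is_lub (range K) a -> is_lub (range L) b ->
  is_lub (range (fun i => K i + L i)) (a + b).
Proof.
move=> HK HL Ha Hb; case: (HM) => _ _ H3.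
apply: is_lubI => [i|u Hu].
  by apply: leM_add; [apply: is_lub_ub Ha | apply: is_lub_ub Hb].
have HaL : forall j, leM (a + L j) u.
  move=> j; rewrite addrC.
  have := H3 (L j) K a HK Ha => Hl.
  apply: (is_lub_least Hl) => i; rewrite addrC.
  apply: leM_trans (Hu (maxn i j)); apply: leM_add; apply: asc_le => //.
    exact: leq_maxl.
  exact: leq_maxr.
have := H3 a L b HL Hb => Hl.
exact: (is_lub_least Hl).
Qed.

Lemma asc_sum (M : nmodType) (I : Type) (s : seq I) (K : I -> nat -> M) :
  (forall i, ascending (K i)) -> ascending (fun k => \sum_(i <- s) K i k).
Proof. by move=> H k; apply: leM_sum => i _; apply: H. Qed.

Lemma lub_sum (M : nmodType) (HM : flow_monoid M) (I : eqType) (s : seq I)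
  (K : I -> nat -> M) (a : I -> M) :
  (forall i, i \in s -> ascending (K i)) -> (forall i, i \in s -> is_lub (range (K i)) (a i)) ->
  is_lub (range (fun k => \sum_(i <- s) K i k)) (\sum_(i <- s) a i).
Proof.
elim: s => [|x s IH] HK Ha.
  apply: is_lubI => [i|u _]; rewrite !big_nil; [exact: leM_refl | exact: leM0].
have E : (fun k => \sum_(i <- x :: s) K i k) = (fun k => K x k + \sum_(i <- s) K i k).
  by apply: functional_extensionality_dep => k; rewrite big_cons.
rewrite E big_cons; apply: lub_add => //.
- by apply: HK; rewrite inE eqxx.
- by move=> k; apply: leM_sum_seq => i Hi; apply: HK; rewrite inE Hi orbT.
- by apply: Ha; rewrite inE eqxx.
by apply: IH => i Hi; [apply: HK | apply: Ha]; rewrite inE Hi orbT.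
Qed.

Lemma is_lub_ext (M : nmodType) (K L : nat -> M) s :
  (forall i, K i = L i) -> is_lub (range K) s -> is_lub (range L) s.
Proof.
by move=> H Hs; apply: is_lubI => [i|u Hu]; [rewrite -H; apply: is_lub_ub Hs
  | apply: (is_lub_least Hs) => i; rewrite H].
Qed.

Lemma lub_unshift (M : nmodType) (K : nat -> M) s : ascending K ->
  is_lub (range (fun i => K i.+1)) s -> is_lub (range K) s.
Proof.
move=> HK Hs; apply: is_lubI => [i|u Hu].
  exact: leM_trans (HK i) (is_lub_ub _ Hs).
by apply: (is_lub_least Hs) => i; apply: Hu.
Qed.

Lemma leM_sub_sum (M : nmodType) (I : eqType) (s r : seq I) (F : I -> M) :
  uniq s -> uniq r -> {subset s <= r} ->
  leM (\sum_(i <- s) F i) (\sum_(i <- r) F i).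
Proof.
move=> us ur sr; rewrite [X in leM _ X](bigID (mem s)) /=.
have -> : \sum_(i <- r | i \in s) F i = \sum_(i <- s) F i.
  rewrite -big_filter; apply: perm_big.
  apply: uniq_perm => //; first exact: filter_uniq.
  move=> i; rewrite mem_filter; apply/andP/idP => [[]//|H]; split => //.
  exact: sr.
exact: leM_addr.
Qed.

Definition gpick (M : nmodType) (T : countType) (P : pred T) (c : T -> M) (i : nat) : M :=
  match @pickle_inv T i with
  | Some t => if P t then c t else 0
  | None => 0
  end.

Lemma sum_pickle (M : nmodType) (T : countType) (P : pred T) (c : T -> M) (s : seq T) :
  (forall p, p \in s -> P p) ->
  \sum_(p <- s) c p = \sum_(i <- map choice.pickle s) gpick P c i.
Proof.
move=> H; rewrite big_map; apply: eq_big_seq => p /H Hp.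
by rewrite /gpick pickleK_inv Hp.
Qed.

Lemma isum_cofinal (M : nmodType) (HM : flow_monoid M) (T : countType) (P : pred T)
  (c : T -> M) (V : nat -> seq T) (mu : T -> nat) (s : M) :
  (forall k, uniq (V k)) ->
  (forall k p, p \in V k -> P p) ->
  (forall k p, P p -> (mu p <= k)%N -> p \in V k) ->
  is_lub (range (fun k => \sum_(p <- V k) c p)) s ->
  isum P c = s.
Proof.
move=> Vu VP PV Hs.
set L := fun n => \sum_(i < n) gpick P c i.
have HL : ascending L.
  by move=> n; rewrite /L big_ord_recr /=; exists (gpick P c n).
have -> : isum P c = lub L by [].
apply: (cofinal_lub HM (lubP HM HL) Hs).
- move=> n; exists (\max_(i <- iota 0 n) oapp mu 0 (pickle_inv i))%N.
  rewrite /L -(big_mkord xpredT) .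
  rewrite /index_iota subn0 (bigID (fun i => oapp P false (pickle_inv i))) /=.
  have -> : \sum_(i <- iota 0 n | ~~ oapp P false (pickle_inv i)) gpick P c i = 0.
    apply: big1 => i; rewrite /gpick; case: (pickle_inv i) => //= t.
    by move/negbTE ->.
  rewrite addr0 -big_filter (sum_pickle c (VP _)); apply: leM_sub_sum.
  + by apply: filter_uniq; apply: iota_uniq.
  + by rewrite map_inj_uniq //; apply: (pcan_inj pickleK_inv).
  move=> i; rewrite mem_filter mem_iota add0n => /andP [Hi Hn].
  case E: (pickle_inv i) Hi => [t|//] /= Pt.
  have <- : choice.pickle t = i by have := @pickle_invK T i; rewrite E.
  apply: map_f; apply: PV => //.
  have := @leq_bigmax_seq _ (iota 0 n) xpredT (fun i => oapp mu 0 (pickle_inv i)) i.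
  by rewrite mem_iota add0n Hn E /=; apply.
- move=> k; exists (\max_(p <- V k) choice.pickle p).+1.
  rewrite /L -(big_mkord xpredT) (sum_pickle c (VP k)).
  rewrite /index_iota subn0; apply: leM_sub_sum.
  + by rewrite map_inj_uniq //; apply: (pcan_inj pickleK_inv).
  + exact: iota_uniq.
  move=> i /mapP [p Hp ->]; rewrite mem_iota add0n ltnS.
  exact: (@leq_bigmax_seq _ (V k) xpredT choice.pickle p).
Qed.

Fixpoint W (X : {fset nat}) (n x y : nat) : seq (seq nat) :=
  match n with
  | 0 => if (x == y) && (y \in X) then [:: [:: y]] else [::]
  | n'.+1 => if y \in X then [seq rcons q y | w <- (X : seq nat), q <- W X n' x w]
             else [::]
  end.

Lemma head_rcons0 (q : seq nat) b : q != [::] -> head 0 (rcons q b) = head 0 q.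
Proof. by case: q. Qed.

Lemma W_mem X n x y q : q \in W X n x y ->
  [/\ size q = n.+1, all (fun v => v \in X) q, head 0 q = x & last 0 q = y].
Proof.
elim: n y q => [|n IH] y q /=.
  case: ifP => [/andP [/eqP -> Hy]|_] //; rewrite inE => /eqP ->.
  by rewrite /= Hy.
case: ifP => // Hy /allpairsPdep [w [q' [Hw Hq' ->]]].
have [Hs Ha Hh Hl] := IH _ _ Hq'.
rewrite size_rcons Hs all_rcons Hy Ha last_rcons head_rcons0 ?Hh //.
by apply/eqP => E; rewrite E in Hs.
Qed.

Lemma mem_W X n x y q : size q = n.+1 -> all (fun v => v \in X) q ->
  head 0 q = x -> last 0 q = y -> q \in W X n x y.
Proof.
elim: n y q => [|n IH] y q /=.
  case: q => [|a [|b q]] //= _; rewrite andbT => Ha <- <-.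
  by rewrite eqxx Ha inE.
case/lastP: q => [//|q b]; rewrite size_rcons all_rcons last_rcons => [[Hs]] /andP [Hb Ha] Hh <-.
rewrite Hb; apply/allpairsPdep; exists (last 0 q), q; split => //.
- case: q Hs Ha {Hh} => [//|a q'] _ /allP Ha; apply: Ha; exact: mem_last.
apply: IH => //.
by rewrite -Hh head_rcons0 //; apply/eqP => E; rewrite E in Hs.
Qed.

Lemma W_uniq X n x y : uniq (W X n x y).
Proof.
elim: n y => [|n IH] y /=; first by case: ifP.
case: ifP => // _; apply: allpairs_uniq_dep => //; first exact: fset_uniq.
move=> [w1 q1] [w2 q2] /allpairsPdep [w1' [q1' [_ H1 E1]]]
  /allpairsPdep [w2' [q2' [_ H2 E2]]] /= /rcons_inj [Eq].
case: E1 => ? ?; case: E2 => ? ?; subst.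
by move: H1 H2 => /W_mem [_ _ _ <-] /W_mem [_ _ _ <-].
Qed.

Definition V (X : {fset nat}) (x y z k : nat) : seq (seq nat) :=
  [seq rcons q z | n <- iota 0 k, q <- W X n x y].

Lemma V_uniq X x y z k : uniq (V X x y z k).
Proof.
apply: allpairs_uniq_dep => //; first exact: iota_uniq.
  by move=> n _; apply: W_uniq.
move=> [n1 q1] [n2 q2] /allpairsPdep [n1' [q1' [_ H1 E1]]]
  /allpairsPdep [n2' [q2' [_ H2 E2]]] /= /rcons_inj [Eq].
case: E1 => ? ?; case: E2 => ? ?; subst.
move: H1 H2 => /W_mem [A _ _ _] /W_mem [B _ _ _].
by move: A; rewrite B => -[->].
Qed.

Lemma V_path X x y z k p : z \notin X -> p \in V X x y z k -> is_path_to X x y z p.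
Proof.
move=> Hz /allpairsPdep [n [q [_ Hq ->]]].
have [Hs Ha Hh Hl] := W_mem Hq.
rewrite /is_path_to size_rcons Hs /=.
have Hq0 : q != [::] by apply/eqP => E; rewrite E in Hs.
have Hn : nth 0 q n = y by rewrite -Hl -nth_last Hs.
rewrite nth_rcons Hs ltnSn Hn eqxx last_rcons eqxx Hz.
rewrite head_rcons0 // Hh eqxx.
by rewrite -cats1 -Hs take_size_cat // Ha.
Qed.

Lemma path_V X x y z k p : is_path_to X x y z p -> (size p <= k)%N -> p \in V X x y z k.
Proof.
case/lastP: p => [//|q b].
rewrite /is_path_to size_rcons ltnS /= => /and5P [Hq Ha Hh Hn /andP [Hl _]] Hk.
have Hq0 : q != [::] by case: (q) Hq.
have Eb : b = z by move/eqP: Hl; rewrite last_rcons.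
subst b.
apply/allpairsPdep; exists (size q).-1, q; split => //.
  by rewrite mem_iota add0n; case: (size q) Hq Hk => // m _ /=; apply: leq_trans.
apply: mem_W.
- by case: (size q) Hq.
- by move: Ha; rewrite -cats1 take_size_cat.
- by rewrite -(@head_rcons0 q z Hq0); apply/eqP.
move: Hn; rewrite nth_rcons; case E: (size q) Hq => // [m] _ /=.
by rewrite ltnSn => /eqP <-; rewrite -nth_last E.
Qed.

Lemma pathfun_rcons (M : Type) (E : nat -> nat -> M -> M) (q : seq nat) b m :
  q != [::] -> pathfun E (rcons q b) m = E (last 0 q) b (pathfun E q m).
Proof.
case: q => [//|a q] _ /=; elim: q a m => [|c q IH] a m //=.

Qed.

Definition Fk (M : nmodType) (X : {fset nat}) (E : nat -> nat -> M -> M) (inf : nat -> nat -> M) (g : nat -> M) : nat -> M :=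
  fun y => inflow X inf y + \sum_(w <- X) E w y (g w).

Definition itf (M : nmodType) (X : {fset nat}) (E : nat -> nat -> M -> M) (inf : nat -> nat -> M) k : nat -> M :=
  iter k (Fk X E inf) (fun _ => 0).

Definition D (M : nmodType) (X : {fset nat}) (E : nat -> nat -> M -> M) (inf : nat -> nat -> M) n y : M :=
  \sum_(x <- X) \sum_(q <- W X n x y) pathfun E q (inflow X inf x).

Lemma D0 (M : nmodType) (X : {fset nat}) (E : nat -> nat -> M -> M) (inf : nat -> nat -> M) y :
  y \in X -> D X E inf 0 y = inflow X inf y.
Proof.
move=> Hy; rewrite /D (bigD1_seq y) ?fset_uniq //= eqxx Hy /= big_cons big_nil addr0.
rewrite big1 ?addr0 // => x /negbTE Hx.
by rewrite Hx big_nil.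
Qed.

Lemma DS (M : nmodType) (X : {fset nat}) (E : nat -> nat -> M -> M) (inf : nat -> nat -> M) n y :
  (forall w, w \in X -> distributive (E w y)) ->
  y \in X -> D X E inf n.+1 y = \sum_(w <- X) E w y (D X E inf n w).
Proof.
move=> HE Hy; rewrite /D /= Hy.
under eq_bigr do rewrite big_allpairs_dep.
rewrite exchange_big /=; apply: eq_big_seq => w Hw.
rewrite distr_sum; last exact: HE.
apply: eq_bigr => x _; rewrite distr_sum; last exact: HE.
apply: eq_big_seq => q /W_mem [Hs _ _ Hl].
rewrite pathfun_rcons ?Hl //.
by apply/eqP => E0; rewrite E0 in Hs.
Qed.

Lemma itf_D (M : nmodType) (X : {fset nat}) (E : nat -> nat -> M -> M) (inf : nat -> nat -> M) :
  (forall x y, x \in X -> distributive (E x y)) ->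
  forall k y, y \in X -> itf X E inf k y = \sum_(n < k) D X E inf n y.
Proof.
move=> HE; elim=> [|k IH] y Hy; first by rewrite big_ord0.
rewrite /itf iterS -/(itf X E inf k) /Fk big_ord_recl D0 //; congr (_ + _).
rewrite (eq_big_seq (fun w => \sum_(n < k) E w y (D X E inf n w))); last first.
  by move=> w Hw; rewrite IH // distr_sum //; apply: HE.
rewrite exchange_big; apply: eq_bigr => n _ /=.
by rewrite DS // => w Hw; apply: HE.
Qed.

Lemma itf_asc (M : nmodType) (X : {fset nat}) (E : nat -> nat -> M -> M) (inf : nat -> nat -> M) :
  (forall x y, x \in X -> distributive (E x y)) ->
  forall y, y \in X -> ascending (fun k => itf X E inf k y).
Proof.
move=> HE y Hy k; rewrite !itf_D // big_ord_recr /=.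
exact: leM_addr.
Qed.

Lemma flow_val (M : nmodType) (HM : flow_monoid M) (X : {fset nat})
  (E : nat -> nat -> M -> M) (inf : nat -> nat -> M)
  (HE : forall x y, x \in X -> continuousM (E x y) /\ distributive (E x y)) y :
  y \in X -> flow X E inf y = lub (fun k => itf X E inf k y).
Proof.
have HD : forall x y, x \in X -> distributive (E x y) by move=> x0 y0 Hx; case: (HE x0 y0 Hx).
set phi := fun y => lub (fun k => itf X E inf k y).
have Hphi : forall y, y \in X -> is_lub (range (fun k => itf X E inf k y)) (phi y).
  by move=> w Hw; apply: lubP => //; apply: itf_asc.
have Heq : flow_eq X E inf phi.
  move=> w Hw; apply: (lub_unique HM (Hphi w Hw)).
  apply: lub_unshift; first exact: itf_asc.
  apply: (@is_lub_ext M (fun i => inflow X inf w + \sum_(v <- X) E v w (itf X E inf i v)) _ _ (fun i => erefl)).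
  case: (HM) => _ _ H3; apply: H3.
    by move=> k; apply: leM_sum_seq => v Hv; apply: distr_mono; [apply: HD | apply: itf_asc].
  apply: lub_sum => //.
    by move=> v Hv k; apply: distr_mono; [apply: HD | apply: itf_asc].
  move=> v Hv; have [Hc _] := HE v w Hv; apply: Hc; first exact: itf_asc.
  exact: Hphi.
have Hleast : forall g, flow_eq X E inf g -> forall w, w \in X -> leM (phi w) (g w).
  move=> g Hg.
  have Hk : forall k w, w \in X -> leM (itf X E inf k w) (g w).
    elim=> [|k IH] w Hw; first exact: leM0.
    rewrite Hg //; apply: leM_add; first exact: leM_refl.
    by apply: leM_sum_seq => v Hv; apply: distr_mono; [apply: HD | apply: IH].
  by move=> w Hw; apply: (is_lub_least (Hphi w Hw)) => k; apply: Hk.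
have Hfl : is_least_flow X E inf (flow X E inf).
  exact: (epsilon_spec (inhabits (fun _ => 0)) (is_least_flow X E inf) (ex_intro _ phi (conj Heq Hleast))).
move=> Hy; case: (HM) => Ha _ _; apply: Ha.
  exact: (proj2 Hfl phi Heq y Hy).
exact: (Hleast _ (proj1 Hfl) y Hy).
Qed.

Theorem theorem3 (M : nmodType) (HM : flow_monoid M)
    (X : {fset nat}) (E : nat -> nat -> M -> M) (in0 : nat -> nat -> M)
    (HE : forall x y, x \in X -> continuousM (E x y) /\ distributive (E x y))
    (inf : nat -> nat -> M) (y z : nat) :
  y \in X -> z \notin X ->
  tf X E inf y z =
  \sum_(x <- X) isum (is_path_to X x y z) (fun p => pathfun E p (inflow X inf x)).
Proof.
move=> Hy Hz.
have HD : forall x y, x \in X -> distributive (E x y).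
  by move=> x0 y0 Hx; case: (HE x0 y0 Hx).
rewrite /tf flow_val //.
set c := fun x p => pathfun E p (inflow X inf x).
set S := fun x k => \sum_(p <- V X x y z k) c x p.
have HS : forall x, ascending (S x).
  move=> x k; apply: leM_sub_sum; try exact: V_uniq.
  move=> p /allpairsPdep [n [q [Hn Hq ->]]]; apply/allpairsPdep; exists n, q; split => //.
  by move: Hn; rewrite !mem_iota !add0n => Hn; apply: leq_trans Hn _.
have Hs : forall x, is_lub (range (S x)) (isum (is_path_to X x y z) (c x)).
  move=> x; rewrite (@isum_cofinal M HM _ _ (c x) (V X x y z) size (lub (S x))).
  - exact: lubP.
  - by move=> k; apply: V_uniq.
  - by move=> k p; apply: V_path.
  - by move=> k p Hp Hk; apply: path_V.
  by apply: lubP => //; exact: HS.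
have Hc : is_lub (range (fun k => E y z (itf X E inf k y)))
                 (E y z (lub (fun k => itf X E inf k y))).
  have [Hc _] := HE y z Hy; apply: Hc; first exact: itf_asc.
  by apply: lubP => //; apply: itf_asc.

apply: (lub_unique HM Hc).
have := @lub_sum M HM _ X S (fun x => isum (is_path_to X x y z) (c x)) (fun x _ => HS x) (fun x _ => Hs x).
apply: is_lub_ext => k.
rewrite itf_D // (distr_sum (HD _ _ Hy)).
rewrite /S.
under eq_bigr do rewrite /V big_allpairs_dep /=.
have Hi : iota 0 k = index_iota 0 k by rewrite /index_iota subn0.
under eq_bigr do rewrite Hi big_mkord.
rewrite exchange_big; apply: eq_bigr => n _ /=.
rewrite /D (distr_sum (HD _ _ Hy)); apply: eq_bigr => x _.
rewrite (distr_sum (HD _ _ Hy)); apply: eq_big_seq => q /W_mem [Hs' _ _ Hl].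
rewrite /c pathfun_rcons ?Hl //.
by apply/eqP => E0; rewrite E0 in Hs'.
Qed.
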